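(* Let $n\ge2$. (1) For $w\in\mathfrak S_{2n+1}$, if the arcs $\alpha_1(w)=(w_{2n},w_{2n+1})$ and $\alpha_2(w)=(w_{2n-2},w_{2n-1})$ cross, then $w\in\mathfrak B_{2n+1}$ if and only if $\mathrm{std}(w_1\cdots w_{2n-1})\in\mathfrak B_{2n-1}$. (2) For $w\in\mathfrak S_{2n}$, if the arcs $\alpha_1(w)=(w_{2n},2n+1)$ and $\alpha_2(w)=(w_{2n-2},w_{2n-1})$ cross, then $w\in\mathfrak B_{2n}$ if and only if $\mathrm{std}(w_1\cdots w_{2n-1})\in\mathfrak B_{2n-1}$.
   Context: Standardization $\mathrm{std}$ of a word of distinct integers: the permutation of $\{1,\dots,r\}$ with the same relative order. Butler permutations $\mathfrak B_N$ ($N\ge2$): for $w\in\mathfrak S_N$ define directed arcs: if $N$ even, $\alpha_1=(w_N,N+1)$, $\alpha_r=(w_{N-2r+2},w_{N-2r+3})$ ($2\le r\le N/2$), $\alpha_{N/2+1}=(0,w_1)$; if $N$ odd, $\alpha_r=(w_{N-2r+1},w_{N-2r+2})$ ($1\le r\le(N-1)/2$), $\alpha_{(N+1)/2}=(0,w_1)$. Arc $(a,b)$ is forward if $a<b$, else reverse; $(a,b)$ is nested by $(c,d)$ if $\min(c,d)<a,b<\max(c,d)$; two arcs cross if exactly one endpoint of one lies strictly between the endpoints of the other. Let $k$ be least with $\alpha_k,\alpha_{k+1}$ non-crossing; if it exists, $w$ is Butler iff ($\alpha_{k+1}$ nested by $\alpha_k$ and $\alpha_k$ reverse) or ($\alpha_{k+1}$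 not nested by $\alpha_k$ and $\alpha_k$ forward); otherwise put $k=N/2$ ($N$ even) or $(N-1)/2$ ($N$ odd) and $w$ is Butler iff $\alpha_k$ is reverse. *)

(* Defs.v *)
From mathcomp Require Import all_boot.
Set Implicit Arguments. Unset Strict Implicit. Unset Printing Implicit Defensive.

Definition is_perm (N : nat) (w : seq nat) : bool := perm_eq w (iota 1 N).

(* 1-indexed letter w_i *)
Definition letter (w : seq nat) (i : nat) : nat := nth 0 w i.-1.

Definition std (s : seq nat) : seq nat :=
  [seq count (fun y => y <= x) s | x <- s].

Definition arc := (nat * nat)%type.

Definition forward (a : arc) : bool := a.1 < a.2.
Definition reverse (a : arc) : bool := ~~ forward a.

Definition strictly_between (x : nat) (a : arc) : bool :=
  (minn a.1 a.2 < x) && (x < maxn a.1 a.2).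

Definition nested (ab cd : arc) : bool :=
  strictly_between ab.1 cd && strictly_between ab.2 cd.

Definition cross (a b : arc) : bool :=
  (strictly_between b.1 a (+) strictly_between b.2 a)
  || (strictly_between a.1 b (+) strictly_between a.2 b).

Definition narcs (N : nat) : nat := if odd N then N.+1./2 else N./2.+1.

(* the arc alpha_r(w) for w in S_N, 1 <= r <= narcs N *)
Definition alpha (N : nat) (w : seq nat) (r : nat) : arc :=
  if odd N then
    (if r < N.+1./2 then (letter w (N - 2 * r + 1), letter w (N - 2 * r + 2))
     else (0, letter w 1))
  else
    (if r == 1 then (letter w N, N.+1)
     else if r <= N./2 then (letter w (N - 2 * r + 2), letter w (N - 2 * r + 3))
     else (0, letter w 1)).

Definition butler (N : nat) (w : seq nat) : bool :=
  let ks := [seq k <- iota 1 (narcs N).-1 |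
             ~~ cross (alpha N w k) (alpha N w k.+1)] in
  match ks with
  | k :: _ =>
      (nested (alpha N w k.+1) (alpha N w k) && reverse (alpha N w k))
      || (~~ nested (alpha N w k.+1) (alpha N w k) && forward (alpha N w k))
  | [::] => reverse (alpha N w (narcs N).-1)
  end.

(* Main.v *)
Require Import Defs.
From mathcomp Require Import all_boot.
From mathcomp Require Import zify.

Definition amap (g : nat -> nat) (a : Defs.arc) : Defs.arc := (g a.1, g a.2).

Lemma sb_alt x (a : Defs.arc) : strictly_between x a =
  ((a.1 < x) && (x < a.2)) || ((a.2 < x) && (x < a.1)).
Proof.
case: a => a1 a2; rewrite /strictly_between /=.
case: (leqP a1 a2) => h.

  case: (ltnP a1 x) => ?; case: (ltnP x a2) => ?; case: (ltnP a2 x) => ?;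
    case: (ltnP x a1) => ? //=; lia.

case: (ltnP a1 x) => ?; case: (ltnP x a2) => ?; case: (ltnP a2 x) => ?;
  case: (ltnP x a1) => ? //=; lia.
Qed.

Section Amap.
Variables (g : nat -> nat) (S : nat -> Prop).
Hypothesis Hg : forall x y, S x -> S y -> (g x < g y) = (x < y).

Lemma sb_amap x a : S x -> S a.1 -> S a.2 ->
  strictly_between (g x) (amap g a) = strictly_between x a.
Proof. by move=> *; rewrite !sb_alt /= !Hg. Qed.

Lemma cross_amap a b : S a.1 -> S a.2 -> S b.1 -> S b.2 ->
  cross (amap g a) (amap g b) = cross a b.
Proof. by move=> *; rewrite /cross /= !sb_amap. Qed.

Lemma nested_amap a b : S a.1 -> S a.2 -> S b.1 -> S b.2 ->
  nested (amap g a) (amap g b) = nested a b.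
Proof. by move=> *; rewrite /nested /= !sb_amap. Qed.

Lemma forward_amap a : S a.1 -> S a.2 -> forward (amap g a) = forward a.
Proof. by move=> *; rewrite /forward /= Hg. Qed.
End Amap.

Lemma butler_shift N M w v g (S : nat -> Prop) m :
  narcs N = m.+2 -> narcs M = m.+1 -> 0 < m ->
  cross (alpha N w 1) (alpha N w 2) ->
  (forall k, 0 < k <= m.+1 -> alpha M v k = amap g (alpha N w k.+1)) ->
  (forall k, 1 < k <= m.+2 -> S (alpha N w k).1 /\ S (alpha N w k).2) ->
  (forall x y, S x -> S y -> (g x < g y) = (x < y)) ->
  butler N w = butler M v.
Proof.
rewrite /butler => -> -> m0 Hc Hal HS Hg /=.
rewrite Hc /= -[2]/(1+1) iotaDl filter_map.
have Hf : [seq i <- iota 1 m | preim (addn 1)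
             (fun k => ~~ cross (alpha N w k) (alpha N w k.+1)) i]
        = [seq k <- iota 1 m | ~~ cross (alpha M v k) (alpha M v k.+1)].
  apply: eq_in_filter => k; rewrite mem_iota => hk /=.
  rewrite add1n !Hal; try lia.
  have [h1 h2] := HS k.+1 ltac:(lia). have [h3 h4] := HS k.+2 ltac:(lia).
  by rewrite (cross_amap _ _ Hg).
rewrite Hf.
case E: [seq k <- iota 1 m | ~~ cross (alpha M v k) (alpha M v k.+1)] => [|k ks] /=.
  rewrite Hal; last lia.
  have [h1 h2] := HS m.+1 ltac:(lia).
  by rewrite /reverse (forward_amap _ _ Hg).
have : k \in iota 1 m by have := mem_head k ks; rewrite -E mem_filter => /andP[].
rewrite mem_iota => hk.
rewrite add1n !Hal; try lia.
have [h1 h2] := HS k.+1 ltac:(lia). have [h3 h4] := HS k.+2 ltac:(lia).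
by rewrite /reverse !(forward_amap _ _ Hg) // !(nested_amap _ _ Hg).
Qed.

Definition gcount (t : seq nat) (x : nat) := count (fun y => y <= x) t.

Lemma count_lt s x y : x < y -> y \in s -> gcount s x < gcount s y.
Proof.
rewrite /gcount => hxy; elim: s => [|z s IH] //=; rewrite in_cons.
case/orP => [/eqP <-|hy].
  rewrite leqnn (leqNgt y x) hxy /= add1n ltnS.
  apply: sub_count => u /= hu; lia.
have := IH hy; case: (leqP z x) => h1; case: (leqP z y) => h2 /=; lia.
Qed.

Lemma count_mono s x y : x <= y -> gcount s x <= gcount s y.
Proof. by move=> h; apply: sub_count => u /= hu; lia. Qed.

Lemma gcount_lt s x y : (y = 0 \/ y \in s) -> (gcount s x < gcount s y) = (x < y).
Proof.
move=> hy; case: (ltnP x y) => h.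
  by case: hy => [hy|hy]; [lia | apply/idP; apply: count_lt].
by apply/negbTE; rewrite -leqNgt; apply: count_mono.
Qed.

Lemma letter_std N n w i : is_perm N w -> 2 * n <= N -> 0 < i < 2 * n ->
  letter (std (take (2 * n - 1) w)) i = gcount (take (2 * n - 1) w) (letter w i)
  /\ letter w i \in take (2 * n - 1) w.
Proof.
move=> /perm_size; rewrite size_iota => hs hN hi.
have hst : size (take (2 * n - 1) w) = 2 * n - 1 by rewrite size_takel // hs; lia.
rewrite /letter /std (nth_map 0); last by rewrite hst; lia.
rewrite nth_take; last lia.
split => //.
rewrite -(nth_take _ (n0 := 2 * n - 1)); last lia.
by apply: mem_nth; rewrite hst; lia.
Qed.

Lemma gcount0 N n w : is_perm N w -> gcount (take (2 * n - 1) w) 0 = 0.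
Proof.
move=> hp; rewrite /gcount (eq_in_count (a2 := pred0)) ?count_pred0 //.
move=> x /mem_take; rewrite (perm_mem hp) mem_iota /=; lia.
Qed.

Theorem lemma4p5 (n : nat) (hn : 2 <= n) :
  (forall w : seq nat, is_perm (2 * n + 1) w ->
     cross (letter w (2 * n), letter w (2 * n + 1))
           (letter w (2 * n - 2), letter w (2 * n - 1)) ->
     (butler (2 * n + 1) w <-> butler (2 * n - 1) (std (take (2 * n - 1) w))))
  /\
  (forall w : seq nat, is_perm (2 * n) w ->
     cross (letter w (2 * n), 2 * n + 1)
           (letter w (2 * n - 2), letter w (2 * n - 1)) ->
     (butler (2 * n) w <-> butler (2 * n - 1) (std (take (2 * n - 1) w)))).
Proof.
have oM : odd (2 * n - 1) = true.
  by rewrite (_ : 2 * n - 1 = (n.-1).*2.+1) ?oddS ?odd_double //; lia.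
have hM : (2 * n - 1).+1./2 = n.
  by rewrite (_ : (2 * n - 1).+1 = n.*2) ?doubleK //; lia.
have nM : narcs (2 * n - 1) = (n.-1).+1 by rewrite /narcs oM hM; lia.
split => w hp hc.
- have oN : odd (2 * n + 1) = true.
    by rewrite (_ : 2 * n + 1 = n.*2.+1) ?oddS ?odd_double //; lia.
  have hN : (2 * n + 1).+1./2 = n.+1.
    by rewrite (_ : (2 * n + 1).+1 = n.+1.*2) ?doubleK //; lia.
  have hlet i := letter_std _ n _ i hp (ltac:(lia) : 2 * n <= 2 * n + 1).
  have g0 := gcount0 _ n _ hp.
  set t := take (2 * n - 1) w in hlet g0 *.
  suff -> : butler (2 * n + 1) w = butler (2 * n - 1) (std t) by [].
  apply: (butler_shift _ _ _ _ (gcount t) (fun y => y = 0 \/ y \in t) n.-1).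
  + by rewrite /narcs oN hN; lia.
  + exact: nM.
  + lia.
  + rewrite /alpha oN hN.
    have h1 : 1 < n.+1 by lia.
    have h2 : 2 < n.+1 by lia.
    rewrite h1 h2.
    have e1 : 2 * n + 1 - 2 * 1 + 1 = 2 * n by lia.
    have e2 : 2 * n + 1 - 2 * 1 + 2 = 2 * n + 1 by lia.
    have e3 : 2 * n + 1 - 2 * 2 + 1 = 2 * n - 2 by lia.
    have e4 : 2 * n + 1 - 2 * 2 + 2 = 2 * n - 1 by lia.
    by rewrite e1 e2 e3 e4.
  + move=> k hk; rewrite /alpha oN hN oM hM ltnS.
    case: (ltnP k n) => hkn.
      rewrite /amap /= !(fun i h => (hlet i h).1); try lia.
      by congr (gcount t (letter w _), gcount t (letter w _)); lia.
    rewrite /amap /= g0 (hlet 1 ltac:(lia)).1 //.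
  + move=> k hk; rewrite /alpha oN hN.
    case: (ltnP k n.+1) => hkn /=.
      by split; right; apply: (hlet _ _).2; lia.
    by split; [left | right; apply: (hlet _ _).2; lia].
  + by move=> x y _ hy; apply: gcount_lt.
- have oN : odd (2 * n) = false by rewrite mul2n odd_double.
  have hN : (2 * n)./2 = n by rewrite mul2n doubleK.
  have hlet i := letter_std _ n _ i hp (leqnn (2 * n)).
  have g0 := gcount0 _ n _ hp.
  set t := take (2 * n - 1) w in hlet g0 *.
  suff -> : butler (2 * n) w = butler (2 * n - 1) (std t) by [].
  apply: (butler_shift _ _ _ _ (gcount t) (fun y => y = 0 \/ y \in t) n.-1).
  + by rewrite /narcs oN hN; lia.
  + exact: nM.
  + lia.
  + rewrite /alpha oN hN /=.
    have h2 : 2 <= n by lia.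
    rewrite h2.
    have e3 : 2 * n - 2 * 2 + 2 = 2 * n - 2 by lia.
    have e4 : 2 * n - 2 * 2 + 3 = 2 * n - 1 by lia.
    rewrite e3 e4. by move: hc; rewrite addn1.
  + move=> k hk; rewrite /alpha oN hN oM hM eqSS.
    have -> : (k == 0) = false by lia.
    case: (ltnP k n) => hkn /=.
      rewrite /amap /= !(fun i h => (hlet i h).1); try lia.
      by congr (gcount t (letter w _), gcount t (letter w _)); lia.
    rewrite /amap /= g0 (hlet 1 ltac:(lia)).1 //.
  + move=> k hk; rewrite /alpha oN hN.
    have -> : (k == 1) = false by lia.
    case: (leqP k n) => hkn /=.
      by split; right; apply: (hlet _ _).2; lia.
    by split; [left | right; apply: (hlet _ _).2; lia].
  + by move=> x y _ hy; apply: gcount_lt.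
Qed.
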